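(* Let $n\ge 3$ and let $\{\mathcal{G}_k\}_{k\ge0}$ be any sequence of digraphs on $\mathcal{V}=\{1,\dots,n\}$. For every algorithm in the class $\mathcal{A}_{\rm ave}$ (i.e. every choice of parameters with $\eta_k\in(0,1]$ and $\alpha_k\in[0,1-\eta_k]$ for all $k$), every initial time $k_0\ge 0$ and every initial value $x^0\in\mathbb{R}^n$ not lying on the consensus manifold $\mathrm{C}=\{x\in\mathbb{R}^n: x_1=\dots=x_n\}$, finite-time consensus is not achieved: for every $T\ge k_0$ the states $x_1(T),\dots,x_n(T)$ are not all equal.
   Context: Network of nodes $\mathcal{V}=\{1,\dots,n\}$, discrete time $k=0,1,2,\dots$, state $x_i(k)\in\mathbb{R}$ of node $i$, $x(k)=(x_1(k),\dots,x_n(k))^T$. At each time $k$ a digraph $\mathcal{G}_k=(\mathcal{V},\mathcal{E}_k)$ is given; node $j$ is a neighbor of node $i$ at time $k$ if $(j,i)\in\mathcal{E}_k$, and every node is always a neighbor of itself; $\mathcal{N}_i(k)$ denotes the neighbor set of $i$ at time $k$. The algorithm is $$x_i(k+1)=\eta_k x_i(k)+\alpha_k\min_{j\in\mathcal{N}_i(k)}x_j(k)+(1-\eta_k-\alpha_k)\max_{j\in\mathcal{N}_i(k)}x_j(k),\quad i=1,\dots,n,$$ where $\{\eta_k\},\{\alpha_k\}$ are given real sequences (the same for all nodes) with $\eta_k\ge0,\alpha_k\ge0,\alpha_k+\eta_k\le1$. The class $\mathcal{A}_{\rm ave}$ consists of those algorithms with $\eta_k\in(0,1]$, $\alpha_k\in[0,1-\eta_k]$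 for all $k$. The iteration is started at an initial time $k_0\ge0$ with $x(k_0)=x^0$. Finite-time consensus for $x^0$ means there exist $z_*\in\mathbb{R}$ and an integer $T_*$ with $x_i(T_* )=z_*$ for all $i$. *)

(* Defs.v *)
(* Reals are modelled by an arbitrary real field R. *)
From HB Require Import structures.
From mathcomp Require Import all_boot all_order all_algebra.
Set Implicit Arguments. Unset Strict Implicit. Unset Printing Implicit Defensive.
Import Order.TTheory GRing.Theory Num.Theory.
Local Open Scope ring_scope.

(* Nodes are 'I_n (node i+1 of the paper is i : 'I_n).
   A time-varying digraph is  G : nat -> rel 'I_n  with  G k j i  meaning
   (j,i) is an edge of G_k. *)
Definition neighbor (n : nat) (G : nat -> rel 'I_n) (k : nat) (i j : 'I_n) : bool :=
  (j == i) || G k j i.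

(* min / max of x over the neighbor set N_i(k) (nonempty since i is in it). *)
Definition nbr_min (R : realFieldType) (n : nat) (G : nat -> rel 'I_n) (k : nat)
  (x : 'I_n -> R) (i : 'I_n) : R :=
  foldr Num.min (x i) [seq x j | j <- enum 'I_n & neighbor G k i j].

Definition nbr_max (R : realFieldType) (n : nat) (G : nat -> rel 'I_n) (k : nat)
  (x : 'I_n -> R) (i : 'I_n) : R :=
  foldr Num.max (x i) [seq x j | j <- enum 'I_n & neighbor G k i j].

Definition step (R : realFieldType) (n : nat) (G : nat -> rel 'I_n)
  (eta alpha : nat -> R) (k : nat) (x : 'I_n -> R) : 'I_n -> R :=
  fun i => eta k * x i + alpha k * nbr_min G k x i
           + (1 - eta k - alpha k) * nbr_max G k x i.

(* traj ... k0 x0 m = x(k0 + m), the state m steps after starting at time k0. *)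
Fixpoint traj (R : realFieldType) (n : nat) (G : nat -> rel 'I_n)
  (eta alpha : nat -> R) (k0 : nat) (x0 : 'I_n -> R) (m : nat) : 'I_n -> R :=
  match m with
  | 0 => x0
  | m'.+1 => step G eta alpha (k0 + m') (traj G eta alpha k0 x0 m')
  end.

Definition state (R : realFieldType) (n : nat) (G : nat -> rel 'I_n)
  (eta alpha : nat -> R) (k0 : nat) (x0 : 'I_n -> R) (T : nat) : 'I_n -> R :=
  traj G eta alpha k0 x0 (T - k0).

Definition consensus (R : realFieldType) (n : nat) (x : 'I_n -> R) : Prop :=
  forall i j : 'I_n, x i = x j.

Definition in_A_ave (R : realFieldType) (eta alpha : nat -> R) : Prop :=
  forall k, (0 < eta k <= 1) /\ (0 <= alpha k <= 1 - eta k).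

(* Main.v *)
Require Import Defs.
From HB Require Import structures.
From mathcomp Require Import all_boot all_order all_algebra.
From mathcomp Require Import lra.
Import Order.TTheory GRing.Theory Num.Theory.
Local Open Scope ring_scope.

Lemma foldr_max_ge (R : realFieldType) (a : R) s : a <= foldr Num.max a s.
Proof. elim: s => //= y s IH; by rewrite le_max IH orbT. Qed.

Lemma foldr_max_le (R : realFieldType) (a B : R) s :
  a <= B -> all (fun y => y <= B) s -> foldr Num.max a s <= B.
Proof. move=> Ha; elim: s => //= y s IH /andP[Hy Hs]; by rewrite ge_max Hy IH. Qed.

Lemma foldr_min_le (R : realFieldType) (a : R) s : foldr Num.min a s <= a.
Proof. elim: s => //= y s IH; by rewrite ge_min IH orbT. Qed.

Lemma foldr_min_ge (R : realFieldType) (a B : R) s :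
  B <= a -> all (fun y => B <= y) s -> B <= foldr Num.min a s.
Proof. move=> Ha; elim: s => //= y s IH /andP[Hy Hs]; by rewrite le_min Hy IH. Qed.

Lemma step_noncons (R : realFieldType) (n : nat) (G : nat -> rel 'I_n)
  (eta alpha : nat -> R) (hA : in_A_ave eta alpha) k (x : 'I_n -> R) :
  ~ consensus x -> ~ consensus (step G eta alpha k x).
Proof.
move=> hx hc; case: n G x hx hc => [|n] G x hx hc.
  by apply: hx => [[]].
have [i _ Hi] := @Order.TotalTheory.arg_maxP _ R _ ord0 predT x isT.
have [j _ Hj] := @Order.TotalTheory.arg_minP _ R _ ord0 predT x isT.
set M := x i.
set m := x j.
have HM : forall l, x l <= M by move=> l; exact: Hi.
have Hm : forall l, m <= x l by move=> l; exact: Hj.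
have Hmm : m < M.
  rewrite lt_neqAle (le_trans (Hm ord0) (HM ord0)) andbT.
  apply/negP => /eqP E; apply: hx => a b.
  have H1 : forall a b, x a <= x b.
    by move=> a0 b0; apply: le_trans (HM a0) _; rewrite -E; exact: Hm.
  by apply/eqP; rewrite eq_le !H1.
have allM : forall l, all (fun y => y <= M) [seq x j0 | j0 <- enum 'I_n.+1 & neighbor G k l j0].
  by move=> l; apply/allP => y /mapP [z _ ->]; exact: HM.
have allm : forall l, all (fun y => m <= y) [seq x j0 | j0 <- enum 'I_n.+1 & neighbor G k l j0].
  by move=> l; apply/allP => y /mapP [z _ ->]; exact: Hm.
have Ui : M <= nbr_max G k x i by rewrite /nbr_max /M; exact: foldr_max_ge.
have Li : m <= nbr_min G k x i by apply: foldr_min_ge.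
have Uj : nbr_max G k x j <= M by apply: foldr_max_le.
have Lj : nbr_min G k x j <= m by rewrite /nbr_min /m; exact: foldr_min_le.
have := hc i j; rewrite /step.
have [/andP [e0 e1] /andP [a0 a1]] := hA k.
have P1 : 0 <= alpha k * (nbr_min G k x i - nbr_min G k x j).
  by apply: mulr_ge0 => //; rewrite subr_ge0 (le_trans Lj Li).
have P2 : 0 <= (1 - eta k - alpha k) * (nbr_max G k x i - nbr_max G k x j).
  by apply: mulr_ge0; rewrite subr_ge0 // (le_trans Uj Ui).
have P3 : 0 < eta k * (M - m) by apply: mulr_gt0; rewrite // subr_gt0.
move=> E; rewrite /M /m in P3.
clear allM allm Hi Hj HM Hm Ui Li Uj Lj Hmm.
rewrite !mulrBr in P1 P2 P3; lra.
Qed.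

Theorem theorem1 (R : realFieldType) (n : nat) (hn : (3 <= n)%N)
  (G : nat -> rel 'I_n) (eta alpha : nat -> R)
  (hA : in_A_ave eta alpha) (k0 : nat) (x0 : 'I_n -> R)
  (hx0 : ~ consensus x0) :
  forall T : nat, (k0 <= T)%N -> ~ consensus (state G eta alpha k0 x0 T).
Proof.
move=> T _; rewrite /state; elim: (T - k0)%N => //= m IH.
exact: step_noncons.
Qed.
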